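(* Let $\mathscr T$ be a functor satisfying (T1)–(T4) and $\mathcal M=(M,\le,{}^\perp)$ a complete orthomodular lattice, and put $L_{\mathcal M}=\mathscr T(\mathbf{Lin}(\mathcal M))$. Then $\mathscr P(L_{\mathcal M})=(\mathscr P(L_{\mathcal M}),\bigcup,\odot,{}^*,{\sim},\{\mathrm{id}_M\})$ is a $\mathscr T$-based orthomodular dynamic algebra.
   Context: An involutive unital quantale is $(Q,\bigsqcup,\odot,{}^*,e)$: complete join-semilattice $Q$, associative $\odot$ distributing over arbitrary joins in each argument, unit $e$, ${}^*$ with $x^{**}=x$, $(x\odot y)^*=y^*\odot x^*$, $(\bigsqcup x_i)^*=\bigsqcup x_i^*$. An involutive generalized dynamic algebra (IDA) is such a quantale with ${\sim}\colon K\to K$ satisfying, for all $x,y$ and families $(x_i)$: ${\sim}(x\odot{\sim}{\sim}y)={\sim}(x\odot y)$; ${\sim}(\bigsqcup{\sim}{\sim}x_i)={\sim}(\bigsqcup x_i)$; $({\sim}x)^*={\sim}x$; ${\sim}{\sim}({\sim}{\sim}x\odot y)={\sim}({\sim}x\sqcup{\sim}({\sim}x\sqcup y))$. Test set $\widetilde K=\{{\sim}k\}$; $\bigvee W={\sim}{\sim}\bigsqcup W$; $w^\perp={\sim}w$; $k\preceq l$ iff $\bigvee\{k,l\}=l$; $k\bullet v={\sim}{\sim}(k\odot v)$; $k\equiv l$ iff $k\bullet w=l\bullet w$ for all $w\in\widetilde K$. IDA morphisms preserve arbitrary joins, $\odot$, ${}^*$, unit, ${\sim}$ (category $\mathbb{IDA}$);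 semi-Foulis means $(\widetilde K,\preceq,{}^\perp)$ is a complete orthomodular lattice. $\mathbb{IM}$: involutive monoids and homomorphisms. For a complete orthomodular lattice $\mathcal M$: $\pi_m(x)=m\wedge(m^\perp\vee x)$; $\mathbf{Lin}(\mathcal M)$ is the set of maps $f$ admitting $f^*$ with $f(x)\le y^\perp\iff x\le f^*(y)^\perp$, an IDA under pointwise joins, composition, ${}^*$, $\mathrm{id}$, ${\sim}f=\pi_{f(1)^\perp}$, with test set $\{\pi_m\mid m\in M\}$. For an involutive submonoid $L\supseteq\{\pi_m\}$, $\mathscr P(L)$ is the IDA of subsets of $L$ with union, $A\odot B=\{a\circ b\mid a\in A,b\in B\}$, $A^*=\{a^*\mid a\in A\}$, unit $\{\mathrm{id}_M\}$, ${\sim}A=\{\pi_{(\bigvee_{a\in A}a(1))^\perp}\}$. $\mathscr T\colon\mathbb{IDA}\to\mathbb{IM}$ satisfies: (T1) $\widetilde K\subseteq\mathscr T(K)\subseteq K$, $\mathscr T(K)$ an involutive submonoid of $(K,\odot,{}^*,e)$; (T2) for semi-Foulis $\mathfrak K$ with $s=t\iff s\equiv t$ on $\mathscr T(K)$, $k\mapsto k\bullet(-)$ is an isomorphism $\mathscr T(\mathfrak K)\to\mathscr T(\mathbf{Lin}(\widetilde{\mathfrak K}))$; (T3) $f\mapsto\{f\}$ is an isomorphism $\mathscr T(\mathbf{Lin}(\mathcal M))\to\mathscr T(\mathscr P(\mathscr T(\mathbf{Lin}(\mathcal M))))$ for every complete orthomodular lattice $\mathcal M$; (T4) $\mathscr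 T(f)$ is the restriction of $f$. A $\mathscr T$-based orthomodular dynamic algebra is an IDA with: (TODA1) $(\widetilde K,\preceq,{}^\perp)$ a complete orthomodular lattice; (TODA2) every $A$ with $\mathscr T(K)\subseteq A\subseteq K$ closed under $\odot$, ${}^*$, arbitrary joins equals $K$; (TODA3) for $S,T\subseteq\mathscr T(K)$, $\bigsqcup S=\bigsqcup T$ iff $S=T$; (TODA4) for $s,t\in\mathscr T(K)$, $s=t$ iff $s\equiv t$. *)

(* Defs.v *)
From Stdlib Require Import ClassicalEpsilon.
Set Implicit Arguments.
Unset Strict Implicit.

Definition pairset {T : Type} (x y : T) : T -> Prop := fun z => z = x \/ z = y.
Definition image {A B : Type} (f : A -> B) (S : A -> Prop) : B -> Prop :=
  fun y => exists x, S x /\ y = f x.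
Definition is_lub {T : Type} (le : T -> T -> Prop) (S : T -> Prop) (s : T) : Prop :=
  (forall x, S x -> le x s) /\ (forall u, (forall x, S x -> le x u) -> le s u).
Definition is_glb {T : Type} (le : T -> T -> Prop) (S : T -> Prop) (s : T) : Prop :=
  (forall x, S x -> le s x) /\ (forall u, (forall x, S x -> le u x) -> le u s).

Record isCOML (T : Type) (le : T -> T -> Prop) (perp : T -> T) : Prop := {
  coml_refl : forall x, le x x;
  coml_trans : forall x y z, le x y -> le y z -> le x z;
  coml_antisym : forall x y, le x y -> le y x -> x = y;
  coml_complete : forall S : T -> Prop, exists s, is_lub le S s;
  coml_perp_invol : forall x, perp (perp x) = x;
  coml_perp_anti : forall x y, le x y -> le (perp y) (perp x);
  (* x v x^perp = 1 : every upper bound of x and x^perp is the top *)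
  coml_perp_compl : forall x z, le x z -> le (perp x) z -> forall w, le w z;
  (* orthomodular law: x <= y -> y = x v (y /\ x^perp) *)
  coml_orthomod : forall x y m, le x y -> is_glb le (pairset y (perp x)) m ->
                  is_lub le (pairset x m) y
}.

Record COML := {
  cm_car :> Type;
  cm_le : cm_car -> cm_car -> Prop;
  cm_perp : cm_car -> cm_car;
  cm_ax : isCOML cm_le cm_perp
}.

Section COMLops.
Variable M : COML.
Definition msup (S : M -> Prop) : M :=
  proj1_sig (constructive_indefinite_description _ (coml_complete (cm_ax M) S)).
Definition mtop : M := msup (fun _ => True).
Definition mjoin (a b : M) : M := msup (pairset a b).
Definition mmeet (a b : M) : M := msup (fun z => cm_le z a /\ cm_le z b).
Definition sasaki (m : M) (x : M) : M := mmeet m (mjoin (cm_perp m) x).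

Definition isAdjoint (f g : M -> M) : Prop :=
  forall x y, cm_le (f x) (cm_perp y) <-> cm_le x (cm_perp (g y)).
Definition hasAdj (f : M -> M) : Prop := exists g, isAdjoint f g.

Definition LinCar : Type := {f : M -> M | hasAdj f}.

Lemma hasAdj_id : hasAdj (fun x => x).
Proof. exists (fun x => x); intros x y; tauto. Qed.

Definition idLin : LinCar := exist _ (fun x => x) hasAdj_id.

(* Coerce a map into Lin(M); the fallback branch is never used for the
   operations below, since Lin(M) is closed under them. *)
Definition mkLin (f : M -> M) : LinCar :=
  match excluded_middle_informative (hasAdj f) with
  | left p => exist _ f p
  | right _ => idLin
  end.

Definition adjraw (f : LinCar) : M -> M :=
  proj1_sig (constructive_indefinite_description _ (proj2_sig f)).
End COMLops.

(* Signatures of involutive unital quantales with ~ (IDA signature)   *)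
Record IDAS := {
  car :> Type;
  qjoin : (car -> Prop) -> car;
  qmul : car -> car -> car;
  qinv : car -> car;
  qone : car;
  qneg : car -> car
}.
Arguments qone {i}.
Arguments qinv {i}.
Arguments qneg {i}.
Arguments qmul {i}.
Arguments qjoin {i}.

Section IDAdefs.
Variable K : IDAS.
Definition qle (x y : K) : Prop := qjoin (pairset x y) = y.

Definition is_IDA : Prop :=
  (forall x : K, qle x x) /\
  (forall x y z : K, qle x y -> qle y z -> qle x z) /\
  (forall x y : K, qle x y -> qle y x -> x = y) /\
  (forall S : K -> Prop, is_lub qle S (qjoin S)) /\
  (forall x y z : K, qmul x (qmul y z) = qmul (qmul x y) z) /\
  (forall x : K, qmul qone x = x) /\ (forall x : K, qmul x qone = x) /\
  (forall (x : K) (S : K -> Prop), qmul x (qjoin S) = qjoin (image (qmul x) S)) /\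
  (forall (x : K) (S : K -> Prop), qmul (qjoin S) x = qjoin (image (fun s => qmul s x) S)) /\
  (forall x : K, qinv (qinv x) = x) /\
  (forall x y : K, qinv (qmul x y) = qmul (qinv y) (qinv x)) /\
  (forall S : K -> Prop, qinv (qjoin S) = qjoin (image qinv S)) /\
  (forall x y : K, qneg (qmul x (qneg (qneg y))) = qneg (qmul x y)) /\
  (forall S : K -> Prop, qneg (qjoin (image (fun x => qneg (qneg x)) S)) = qneg (qjoin S)) /\
  (forall x : K, qinv (qneg x) = qneg x) /\
  (forall x y : K, qneg (qneg (qmul (qneg (qneg x)) y)) =
               qneg (qjoin (pairset (qneg x) (qneg (qjoin (pairset (qneg x) y)))))).

Definition test (k : K) : Prop := exists l, k = qneg l.
Definition tvee (W : K -> Prop) : K := qneg (qneg (qjoin W)).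
Definition bullet (k v : K) : K := qneg (qneg (qmul k v)).
Definition tequiv (k l : K) : Prop := forall w, test w -> bullet k w = bullet l w.

Definition Tst : Type := {k : K | test k}.
Definition tle (a b : Tst) : Prop := tvee (pairset (proj1_sig a) (proj1_sig b)) = proj1_sig b.
Definition tperp (a : Tst) : Tst :=
  exist _ (qneg (proj1_sig a)) (ex_intro _ (proj1_sig a) eq_refl).
Definition semiFoulis : Prop := isCOML tle tperp.

Definition bulletT (k : K) (w : Tst) : Tst :=
  exist _ (bullet k (proj1_sig w)) (ex_intro _ (qneg (qmul k (proj1_sig w))) eq_refl).
End IDAdefs.

Definition COML_of (K : IDAS) (H : semiFoulis K) : COML :=
  {| cm_car := Tst K; cm_le := @tle K; cm_perp := @tperp K; cm_ax := H |}.

Definition IDAmorph (K K' : IDAS) (f : K -> K') : Prop :=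
  (forall S, f (qjoin S) = qjoin (image f S)) /\
  (forall x y, f (qmul x y) = qmul (f x) (f y)) /\
  (forall x, f (qinv x) = qinv (f x)) /\
  f qone = qone /\
  (forall x, f (qneg x) = qneg (f x)).

Definition IMiso (K K' : IDAS) (S1 : K -> Prop) (S2 : K' -> Prop) (phi : K -> K') : Prop :=
  (forall x, S1 x -> S2 (phi x)) /\
  (forall x y, S1 x -> S1 y -> phi x = phi y -> x = y) /\
  (forall z, S2 z -> exists x, S1 x /\ phi x = z) /\
  (forall x y, S1 x -> S1 y -> phi (qmul x y) = qmul (phi x) (phi y)) /\
  (forall x, S1 x -> phi (qinv x) = qinv (phi x)) /\
  phi qone = qone.

Definition LinIDA (M : COML) : IDAS := {|
  car := LinCar M;
  qjoin := fun S => mkLin (fun x => msup (fun y => exists f, S f /\ y = proj1_sig f x));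
  qmul := fun f g => mkLin (fun x => proj1_sig f (proj1_sig g x));
  qinv := fun f => mkLin (adjraw f);
  qone := idLin M;
  qneg := fun f => mkLin (sasaki (cm_perp (proj1_sig f (mtop M))))
|}.

Definition PIDA (M : COML) (L : LinCar M -> Prop) : IDAS := {|
  car := {c : LinCar M | L c} -> Prop;
  qjoin := fun S c => exists A, S A /\ A c;
  qmul := fun A B c => exists a b, A a /\ B b /\
            proj1_sig (proj1_sig c) = (fun x => proj1_sig (proj1_sig a) (proj1_sig (proj1_sig b) x));
  qinv := fun A c => exists a, A a /\ proj1_sig (proj1_sig c) = adjraw (proj1_sig a);
  qone := fun c => proj1_sig (proj1_sig c) = (fun x => x);
  qneg := fun A c => proj1_sig (proj1_sig c) =
            sasaki (cm_perp (msup (fun y => exists a, A a /\ y = proj1_sig (proj1_sig a) (mtop M))))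
|}.

(* T is given by its object part T K (a subset of K); by (T4) its     *)
(* action on a morphism is the restriction, which must land in T K'.  *)
Definition Tfun := forall K : IDAS, K -> Prop.

Definition T1 (T : Tfun) : Prop :=
  forall K : IDAS, is_IDA K ->
    (forall k, test k -> T K k) /\ T K qone /\
    (forall x y, T K x -> T K y -> T K (qmul x y)) /\
    (forall x, T K x -> T K (qinv x)).

Definition T2 (T : Tfun) : Prop :=
  forall (K : IDAS) (HK : is_IDA K) (HF : semiFoulis K),
    (forall s t, T K s -> T K t -> (s = t <-> tequiv s t)) ->
    (forall s, T K s -> hasAdj (M := COML_of HF) (bulletT s)) /\
    IMiso (K' := LinIDA (COML_of HF)) (T K) (T (LinIDA (COML_of HF)))
          (fun s => mkLin (M := COML_of HF) (bulletT s)).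

Definition T3 (T : Tfun) : Prop :=
  forall M : COML,
    IMiso (K' := PIDA (T (LinIDA M))) (T (LinIDA M)) (T (PIDA (T (LinIDA M))))
          (fun f c => proj1_sig c = f).

Definition T4 (T : Tfun) : Prop :=
  forall (K K' : IDAS), is_IDA K -> is_IDA K' ->
    forall f : K -> K', IDAmorph f -> forall k, T K k -> T K' (f k).

Definition Tfunctor (T : Tfun) : Prop := T1 T /\ T2 T /\ T3 T /\ T4 T.

Definition TODA (T : Tfun) (K : IDAS) : Prop :=
  is_IDA K /\
  semiFoulis K /\
  (forall A : K -> Prop,
     (forall k, T K k -> A k) ->
     (forall x y, A x -> A y -> A (qmul x y)) ->
     (forall x, A x -> A (qinv x)) ->
     (forall S, (forall x, S x -> A x) -> A (qjoin S)) ->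
     forall k, A k) /\
  (forall S S' : K -> Prop, (forall x, S x -> T K x) -> (forall x, S' x -> T K x) ->
     (qjoin S = qjoin S' <-> (forall x, S x <-> S' x))) /\
  (forall s t, T K s -> T K t -> (s = t <-> tequiv s t)).

(* Main.v *)
Require Import Defs.
From Stdlib Require Import ClassicalEpsilon FunctionalExtensionality PropExtensionality ProofIrrelevance.

Section Lat.
Context {M : COML}.
Notation le := (@cm_le M).
Notation pp := (@cm_perp M).
Implicit Types a b x y z u m : M.

Lemma le_refl x : le x x. Proof. apply (coml_refl (cm_ax M)). Qed.
Lemma le_trans x y z : le x y -> le y z -> le x z. Proof. apply (coml_trans (cm_ax M)). Qed.
Lemma le_anti x y : le x y -> le y x -> x = y. Proof. apply (coml_antisym (cm_ax M)). Qed.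
Lemma pp_invol x : pp (pp x) = x. Proof. apply (coml_perp_invol (cm_ax M)). Qed.
Lemma pp_anti x y : le x y -> le (pp y) (pp x). Proof. apply (coml_perp_anti (cm_ax M)). Qed.
Lemma pp_swap x y : le x (pp y) -> le y (pp x).
Proof. intro H. apply pp_anti in H. rewrite pp_invol in H. exact H. Qed.
Lemma pp_le_iff x y : le (pp x) (pp y) <-> le y x.
Proof. split; intro H. - apply pp_anti in H. rewrite !pp_invol in H; exact H. - apply pp_anti, H. Qed.

Lemma msup_lub S : is_lub le S (msup S).
Proof. unfold msup. destruct (constructive_indefinite_description _ _) as [s Hs]. exact Hs. Qed.
Lemma msup_ub (S : M -> Prop) x : S x -> le x (msup S).
Proof. intro H; apply (proj1 (msup_lub S)); exact H. Qed.
Lemma msup_le_iff (S : M -> Prop) u : le (msup S) u <-> forall x, S x -> le x u.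
Proof. split.
 - intros H x Hx. eapply le_trans; [apply msup_ub; exact Hx| exact H].
 - intro H. apply (proj2 (msup_lub S)); exact H. Qed.

Lemma eq_ge (x y : M) : (forall u, le x u <-> le y u) -> x = y.
Proof. intro H. apply le_anti; [apply H, le_refl | apply H, le_refl]. Qed.
Lemma eq_le (x y : M) : (forall u, le u x <-> le u y) -> x = y.
Proof. intro H. apply le_anti; [apply H, le_refl | apply H, le_refl]. Qed.

Lemma le_top x : le x (mtop M). Proof. apply msup_ub; exact I. Qed.

Lemma mjoin_le_iff a b u : le (mjoin a b) u <-> le a u /\ le b u.
Proof. unfold mjoin. rewrite msup_le_iff. unfold pairset. split.
 - intro H; split; apply H; auto.
 - intros [H1 H2] x [->| ->]; auto. Qed.
Lemma le_mjoin_l a b : le a (mjoin a b). Proof. apply (mjoin_le_iff a b), le_refl. Qed.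
Lemma le_mjoin_r a b : le b (mjoin a b). Proof. apply (mjoin_le_iff a b), le_refl. Qed.

Lemma le_mmeet_iff a b u : le u (mmeet a b) <-> le u a /\ le u b.
Proof. unfold mmeet. split.
 - intro H. assert (Ha : le (msup (fun z => le z a /\ le z b)) a) by (apply msup_le_iff; tauto).
   assert (Hb : le (msup (fun z => le z a /\ le z b)) b) by (apply msup_le_iff; tauto).
   split; eapply le_trans; eauto.
 - intro H. apply msup_ub; exact H. Qed.
Lemma mmeet_le_l a b : le (mmeet a b) a. Proof. apply (proj1 (le_mmeet_iff a b _) (le_refl _)). Qed.
Lemma mmeet_le_r a b : le (mmeet a b) b. Proof. apply (proj1 (le_mmeet_iff a b _) (le_refl _)). Qed.

Lemma mjoin_comm a b : mjoin a b = mjoin b a.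
Proof. apply eq_ge; intro u; rewrite !mjoin_le_iff; tauto. Qed.
Lemma mmeet_comm a b : mmeet a b = mmeet b a.
Proof. apply eq_le; intro u; rewrite !le_mmeet_iff; tauto. Qed.

Lemma pp_mjoin a b : pp (mjoin a b) = mmeet (pp a) (pp b).
Proof. apply eq_le; intro u. rewrite le_mmeet_iff. split.
 - intro H. apply pp_swap in H. apply mjoin_le_iff in H as [H1 H2].
   split; apply pp_swap; assumption.
 - intros [H1 H2]. apply pp_swap. apply mjoin_le_iff; split; apply pp_swap; assumption. Qed.
Lemma pp_mmeet a b : pp (mmeet a b) = mjoin (pp a) (pp b).
Proof. rewrite <- (pp_invol a), <- (pp_invol b) at 1. rewrite <- pp_mjoin, pp_invol. reflexivity. Qed.

Lemma mmeet_glb a b : is_glb le (pairset a b) (mmeet a b).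
Proof. split.
 - intros x [->| ->]; [apply mmeet_le_l|apply mmeet_le_r].
 - intros u H. apply le_mmeet_iff; split; apply H; unfold pairset; auto. Qed.

Lemma OM x y : le x y -> y = mjoin x (mmeet y (pp x)).
Proof. intro H. pose proof (coml_orthomod (cm_ax M) H (mmeet_glb y (pp x))) as Hl.
 apply le_anti.
 - apply Hl. intros z [->| ->]; [apply le_mjoin_l | apply le_mjoin_r].
 - apply mjoin_le_iff; split; apply (proj1 Hl); unfold pairset; auto. Qed.

Lemma OMd a b : le a b -> mmeet b (mjoin a (pp b)) = a.
Proof. intro H. assert (H' : le (pp b) (pp a)) by (apply pp_anti, H).
 pose proof (OM _ _ H') as E. rewrite pp_invol in E.
 apply (f_equal pp) in E. rewrite pp_invol, pp_mjoin, pp_mmeet, !pp_invol in E.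
 symmetry. exact E. Qed.

Definition sas := sasaki (M := M).

Lemma sas_mono m x y : le x y -> le (sas m x) (sas m y).
Proof. intro H. unfold sas, sasaki. apply le_mmeet_iff; split. apply mmeet_le_l.
 eapply le_trans; [apply mmeet_le_r|]. apply mjoin_le_iff; split; [apply le_mjoin_l|].
 eapply le_trans; [exact H| apply le_mjoin_r]. Qed.

Lemma sas_top m : sas m (mtop M) = m.
Proof. apply le_anti. apply mmeet_le_l. apply le_mmeet_iff; split. apply le_refl.
 eapply le_trans; [apply le_top| apply le_mjoin_r]. Qed.

Lemma sas_hook m x z : le (sas m x) z <-> le x (mjoin (pp m) (mmeet m z)).
Proof. unfold sas, sasaki. split.
 - intro H. pose proof (OM _ _ (le_mjoin_l (pp m) x)) as E. rewrite pp_invol in E.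
   eapply le_trans; [apply (le_mjoin_r (pp m) x)|]. rewrite E.
   apply mjoin_le_iff; split; [apply le_mjoin_l|].
   eapply le_trans; [|apply le_mjoin_r]. apply le_mmeet_iff; split.
   apply mmeet_le_r. rewrite mmeet_comm. exact H.
 - intro H. eapply le_trans. apply (sas_mono m _ _ H). unfold sas, sasaki.
   set (h := mjoin (pp m) (mmeet m z)).
   assert (E1 : mjoin (pp m) h = h).
   { apply le_anti. apply mjoin_le_iff; split; [apply le_mjoin_l|apply le_refl]. apply le_mjoin_r. }
   rewrite E1. unfold h. rewrite (mjoin_comm (pp m)). rewrite (OMd _ _ (mmeet_le_l m z)).
   apply mmeet_le_r. Qed.

Lemma sas_selfadj m x y : le (sas m x) (pp y) <-> le x (pp (sas m y)).
Proof. rewrite sas_hook. unfold sas, sasaki. rewrite pp_mmeet, pp_mjoin, pp_invol. tauto. Qed.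

End Lat.

Section Adj.
Context {M : COML}.
Notation le := (@cm_le M).
Notation pp := (@cm_perp M).
Implicit Types a b x y z u m : M.
Notation top := (mtop M).

Lemma swap_iff a b : le a (pp b) <-> le b (pp a).
Proof. split; apply pp_swap. Qed.

Lemma msup_img_le {I : Type} (S : I -> Prop) (k : I -> M) u :
  le (msup (fun y => exists i, S i /\ y = k i)) u <-> forall i, S i -> le (k i) u.
Proof. rewrite msup_le_iff. split.
 - intros H i Hi. apply H. exists i; auto.
 - intros H y [i [Hi ->]]. auto. Qed.

Lemma adj_sym (f g : M -> M) : isAdjoint f g -> isAdjoint g f.
Proof. unfold isAdjoint in *. intros H x y. rewrite swap_iff, <- (H y x), swap_iff. tauto. Qed.

Lemma adj_unique (f g g' : M -> M) : isAdjoint f g -> isAdjoint f g' -> g = g'.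
Proof. unfold isAdjoint in *. intros H H'. apply functional_extensionality; intro y.
 assert (E : pp (g y) = pp (g' y)).
 { apply eq_le; intro u. rewrite <- H, <- H'. tauto. }
 apply (f_equal pp) in E. rewrite !pp_invol in E. exact E. Qed.

Lemma adj_sup_le (f g : M -> M) (S : M -> Prop) u : isAdjoint f g ->
  (le (f (msup S)) u <-> forall x, S x -> le (f x) u).
Proof. unfold isAdjoint in *. intro H. rewrite <- (pp_invol u). rewrite H, msup_le_iff. split.
 - intros H1 x Hx. apply H. auto.
 - intros H1 x Hx. apply H. auto. Qed.

Lemma adj_sup (f g : M -> M) (S : M -> Prop) : isAdjoint f g ->
  f (msup S) = msup (fun y => exists x, S x /\ y = f x).
Proof. intro H. apply eq_ge; intro u. rewrite (adj_sup_le _ _ _ _ H), msup_img_le. tauto. Qed.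

Lemma adj_comp (f g f' g' : M -> M) : isAdjoint f g -> isAdjoint f' g' ->
  isAdjoint (fun x => f (f' x)) (fun y => g' (g y)).
Proof. unfold isAdjoint in *. intros H H' x y. rewrite H, H'. tauto. Qed.

Lemma adj_sas m : isAdjoint (sas m) (sas m).
Proof. intros x y. apply sas_selfadj. Qed.

Local Notation F f := (proj1_sig f).

Lemma adjraw_spec (f : LinCar M) : isAdjoint (F f) (adjraw f).
Proof. unfold adjraw. destruct (constructive_indefinite_description _ _) as [g Hg]. exact Hg. Qed.

Lemma adjraw_eq (f : LinCar M) (h : M -> M) : isAdjoint (F f) h -> adjraw f = h.
Proof. intro H. eapply adj_unique; [apply adjraw_spec| exact H]. Qed.

Lemma mkLin_spec (f : M -> M) : hasAdj f -> F (mkLin f) = f.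
Proof. intro H. unfold mkLin. destruct (excluded_middle_informative _); [reflexivity| contradiction]. Qed.

Lemma Lin_eq (f g : LinCar M) : F f = F g -> f = g.
Proof. destruct f as [f p], g as [g q]; simpl; intros ->. f_equal. apply proof_irrelevance. Qed.

Lemma Lin_ext (f g : LinCar M) : (forall x, F f x = F g x) -> f = g.
Proof. intro H; apply Lin_eq, functional_extensionality, H. Qed.

Lemma adj_join (S : LinCar M -> Prop) :
  isAdjoint (fun x => msup (fun y => exists f, S f /\ y = F f x))
            (fun y => msup (fun z => exists f, S f /\ z = adjraw f y)).
Proof. intros x y. rewrite msup_img_le, swap_iff, msup_img_le. split.
 - intros H f Hf. apply swap_iff, adjraw_spec, H, Hf.
 - intros H f Hf. apply adjraw_spec, swap_iff, H, Hf. Qed.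

Notation K := (LinIDA M).

Lemma fn_join (S : LinCar M -> Prop) :
  F (@qjoin K S) = fun x => msup (fun y => exists f, S f /\ y = F f x).
Proof. simpl. apply mkLin_spec. eexists; apply adj_join. Qed.
Lemma fn_mul (f g : LinCar M) : F (@qmul K f g) = fun x => F f (F g x).
Proof. simpl. apply mkLin_spec. eexists. apply adj_comp; apply adjraw_spec. Qed.
Lemma fn_inv (f : LinCar M) : F (@qinv K f) = adjraw f.
Proof. simpl. apply mkLin_spec. eexists. apply adj_sym, adjraw_spec. Qed.
Lemma fn_one : F (@qone K) = fun x => x.
Proof. reflexivity. Qed.
Lemma fn_neg (f : LinCar M) : F (@qneg K f) = sas (pp (F f top)).
Proof. simpl. apply mkLin_spec. eexists. apply adj_sas. Qed.

Lemma neg_top (f : LinCar M) : F (@qneg K f) top = pp (F f top).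
Proof. rewrite fn_neg. apply sas_top. Qed.
Lemma nn_top (f : LinCar M) : F (@qneg K (@qneg K f)) top = F f top.
Proof. rewrite !neg_top, pp_invol. reflexivity. Qed.
Lemma neg_congr (f g : LinCar M) : F f top = F g top -> @qneg K f = @qneg K g.
Proof. intro H. apply Lin_eq. rewrite !fn_neg, H. reflexivity. Qed.
Lemma join_pair (f g : LinCar M) a : F (@qjoin K (pairset f g)) a = mjoin (F f a) (F g a).
Proof. rewrite fn_join. apply eq_ge; intro u. rewrite msup_img_le, mjoin_le_iff. unfold pairset. split.
 - intro H; split; apply H; auto.
 - intros [H1 H2] h [-> | ->]; auto. Qed.

Lemma qle_iff (f g : LinCar M) : @qle K f g <-> forall x, le (F f x) (F g x).
Proof. unfold qle. split.
 - intros H x. rewrite <- H. rewrite join_pair. apply le_mjoin_l.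
 - intro H. apply Lin_ext; intro x. rewrite join_pair. apply le_anti.
   apply mjoin_le_iff; split; [apply H|apply le_refl]. apply le_mjoin_r. Qed.

Lemma Lin_is_IDA : is_IDA K.
Proof.
 unfold is_IDA. repeat match goal with |- _ /\ _ => split end.
 - intro x. apply qle_iff; intro; apply le_refl.
 - intros x y z H1 H2. apply qle_iff; intro a. rewrite qle_iff in H1, H2. eapply le_trans; eauto.
 - intros x y H1 H2. rewrite qle_iff in H1, H2. apply Lin_ext; intro a. apply le_anti; auto.
 - intro S. split.
  + intros f Hf. apply qle_iff; intro a. rewrite fn_join. apply msup_ub. exists f; auto.
  + intros u Hu. apply qle_iff; intro a. rewrite fn_join. apply msup_img_le.
   intros f Hf. apply qle_iff, Hu, Hf.
 - intros x y z. apply Lin_ext; intro a. rewrite !fn_mul. reflexivity.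
 - intros x. apply Lin_ext; intro a. rewrite !fn_mul. reflexivity.
 - intros x. apply Lin_ext; intro a. rewrite !fn_mul. reflexivity.
 - intros x S. apply Lin_ext; intro a. rewrite fn_mul, !fn_join.
   rewrite (adj_sup _ _ _ (adjraw_spec x)).
   apply eq_ge; intro u. rewrite !msup_img_le. split.
   + intros H h [f [Hf ->]]. rewrite fn_mul. apply H. exists f; auto.
   + intros H y [f [Hf ->]]. assert (H1 := H (@qmul K x f)). rewrite fn_mul in H1. apply H1. exists f; auto.
 - intros x S. apply Lin_ext; intro a. rewrite fn_mul, !fn_join.
   apply eq_ge; intro u. rewrite !msup_img_le. split.
   + intros H h [f [Hf ->]]. rewrite fn_mul. apply H. auto.
   + intros H f Hf. assert (H1 := H (@qmul K f x)). rewrite fn_mul in H1. apply H1. exists f; auto.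
 - intros x. apply Lin_eq. rewrite !fn_inv. apply adjraw_eq. rewrite fn_inv. apply adj_sym, adjraw_spec.
 - intros x y. apply Lin_eq. rewrite fn_inv, fn_mul, !fn_inv. apply adjraw_eq. rewrite fn_mul.
   apply adj_comp; apply adjraw_spec.
 - intros S. apply Lin_eq. rewrite fn_inv. apply adjraw_eq.
   assert (E : (fun y => msup (fun z => exists f, S f /\ z = adjraw f y)) = F (@qjoin K (image (@qinv K) S))).
   { rewrite fn_join. apply functional_extensionality; intro y. apply eq_ge; intro u. rewrite !msup_img_le. split.
     + intros H h [f [Hf ->]]. rewrite fn_inv. auto.
     + intros H f Hf. assert (H1 := H (@qinv K f)). rewrite fn_inv in H1. apply H1. exists f; auto. }
   rewrite <- E, (fn_join S). apply adj_join.
 - intros x y. apply neg_congr. rewrite !fn_mul. f_equal. apply nn_top.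
 - intros S. apply neg_congr. rewrite !fn_join. apply eq_ge; intro u. rewrite !msup_img_le. split.
   + intros H f Hf. assert (H1 := H (@qneg K (@qneg K f))). rewrite nn_top in H1. apply H1. exists f; auto.
   + intros H h [f [Hf ->]]. rewrite nn_top. auto.
 - intros x. apply Lin_eq. rewrite fn_inv. apply adjraw_eq. rewrite fn_neg. apply adj_sas.
 - intros x y. apply neg_congr. rewrite neg_top, fn_mul, fn_neg, neg_top, pp_invol.
   rewrite !join_pair, !neg_top, join_pair, neg_top.
   unfold sas, sasaki. rewrite pp_mmeet. reflexivity.
Qed.

End Adj.

Lemma coml_transfer {A B : Type} (leA : A -> A -> Prop) (pA : A -> A) (leB : B -> B -> Prop) (pB : B -> B)
  (psi : B -> A) (phi : A -> B) :
  isCOML leA pA -> (forall a, psi (phi a) = a) -> (forall b, phi (psi b) = b) ->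
  (forall x y, leB x y <-> leA (psi x) (psi y)) -> (forall x, psi (pB x) = pA (psi x)) ->
  isCOML leB pB.
Proof.
 intros HA H1 H2 Hle Hp.
 assert (inj : forall x y, psi x = psi y -> x = y).
 { intros x y E. rewrite <- (H2 x), <- (H2 y), E. reflexivity. }
 constructor.
 - intro x. apply Hle, (coml_refl HA).
 - intros x y z. rewrite !Hle. apply (coml_trans HA).
 - intros x y. rewrite !Hle. intros a b. apply inj. apply (coml_antisym HA); [exact a| exact b].
 - intro S. destruct (coml_complete HA (fun a => exists b, S b /\ a = psi b)) as [s [Hs1 Hs2]].
   exists (phi s). split.
   + intros x Hx. apply Hle. rewrite H1. apply Hs1. exists x; auto.
   + intros u Hu. apply Hle. rewrite H1. apply Hs2. intros a [b [Hb ->]]. apply Hle, Hu, Hb.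
 - intro x. apply inj. rewrite !Hp. apply (coml_perp_invol HA).
 - intros x y. rewrite !Hle, !Hp. apply (coml_perp_anti HA).
 - intros x z H H' w. apply Hle. rewrite Hle in H, H'. rewrite Hp in H'. exact (coml_perp_compl HA H H' _).
 - intros x y m Hxy [Hg1 Hg2]. rewrite Hle in Hxy.
   assert (Hg : is_glb leA (pairset (psi y) (pA (psi x))) (psi m)).
   { split.
     - intros z [-> | ->].
       + apply Hle, Hg1. left; auto.
       + rewrite <- Hp. apply Hle, Hg1. right; auto.
     - intros u Hu. rewrite <- (H1 u). apply Hle. apply Hg2. intros z [-> | ->].
       + apply Hle. rewrite H1. apply Hu. left; auto.
       + apply Hle. rewrite H1, Hp. apply Hu. right; auto. }
   destruct (coml_orthomod HA Hxy Hg) as [Hl1 Hl2]. split.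
   + intros z [-> | ->]; apply Hle, Hl1; [left|right]; auto.
   + intros u Hu. apply Hle, Hl2. intros z [-> | ->]; apply Hle, Hu; [left|right]; auto.
Qed.

Lemma set_ext {X : Type} (A B : X -> Prop) : (forall x, A x <-> B x) -> A = B.
Proof. intro H. apply functional_extensionality; intro x. apply propositional_extensionality, H. Qed.

Section PS.
Context {M : COML} (T : Tfun) (HT1 : T1 T).
Notation le := (@cm_le M).
Notation pp := (@cm_perp M).
Notation top := (mtop M).
Notation K := (LinIDA M).
Notation L := (T (LinIDA M)).
Notation E := {c : LinCar M | T (LinIDA M) c}.
Notation P := (PIDA (T (LinIDA M))).
Notation FE c := (proj1_sig (proj1_sig c)).

Lemma HLtest : forall k, test k -> L k. Proof. apply (HT1 _ Lin_is_IDA). Qed.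
Lemma HLone : L (@qone K). Proof. apply (HT1 _ Lin_is_IDA). Qed.
Lemma HLmul x y : L x -> L y -> L (@qmul K x y). Proof. apply (HT1 _ Lin_is_IDA). Qed.
Lemma HLinv x : L x -> L (@qinv K x). Proof. apply (HT1 _ Lin_is_IDA). Qed.

Lemma E_eq (c d : E) : FE c = FE d -> c = d.
Proof. destruct c as [c p], d as [d q]; simpl. intro H. apply Lin_eq in H. subst d. f_equal. apply proof_irrelevance. Qed.

Lemma HLsas (m : M) : L (mkLin (sas m)).
Proof. assert (E1 : mkLin (sas m) = @qneg K (mkLin (sas (pp m)))).
 { apply Lin_eq. rewrite fn_neg, !mkLin_spec. rewrite sas_top, pp_invol. reflexivity.
   eexists; apply adj_sas. eexists; apply adj_sas. }
 rewrite E1. apply HLtest. eexists; reflexivity. Qed.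

Definition sasE (m : M) : E := exist _ (mkLin (sas m)) (HLsas m).
Definition idE : E := exist _ (@qone K) HLone.
Definition mulE (a b : E) : E := exist _ (@qmul K (proj1_sig a) (proj1_sig b)) (HLmul _ _ (proj2_sig a) (proj2_sig b)).
Definition invE (a : E) : E := exist _ (@qinv K (proj1_sig a)) (HLinv _ (proj2_sig a)).
Definition single (e : E) : E -> Prop := fun c => c = e.
Definition sA (A : E -> Prop) : M := msup (fun y => exists a, A a /\ y = FE a top).

Lemma F_sasE m : FE (sasE m) = sas m. Proof. simpl. apply mkLin_spec. eexists; apply adj_sas. Qed.
Lemma F_idE : FE idE = fun x => x. Proof. reflexivity. Qed.
Lemma F_mulE a b : FE (mulE a b) = fun x => FE a (FE b x). Proof. simpl. apply fn_mul. Qed.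
Lemma F_invE a : FE (invE a) = adjraw (proj1_sig a). Proof. simpl. apply fn_inv. Qed.

Lemma mulE_assoc a b c : mulE a (mulE b c) = mulE (mulE a b) c.
Proof. apply E_eq. rewrite !F_mulE. reflexivity. Qed.
Lemma mulE_id_l a : mulE idE a = a. Proof. apply E_eq. rewrite F_mulE. reflexivity. Qed.
Lemma mulE_id_r a : mulE a idE = a. Proof. apply E_eq. rewrite F_mulE. reflexivity. Qed.
Lemma invE_invol a : invE (invE a) = a.
Proof. apply E_eq. rewrite F_invE. apply adjraw_eq. rewrite F_invE. apply adj_sym, adjraw_spec. Qed.
Lemma invE_mul a b : invE (mulE a b) = mulE (invE b) (invE a).
Proof. apply E_eq. rewrite F_invE, F_mulE, !F_invE. apply adjraw_eq. rewrite F_mulE.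
 apply adj_comp; apply adjraw_spec. Qed.
Lemma invE_sas m : invE (sasE m) = sasE m.
Proof. apply E_eq. rewrite F_invE, F_sasE. apply adjraw_eq. change (proj1_sig (proj1_sig (sasE m))) with (FE (sasE m)).
 rewrite F_sasE. apply adj_sas. Qed.

Lemma sasE_inj m m' : sasE m = sasE m' -> m = m'.
Proof. intro H. apply (f_equal (fun c => FE c top)) in H. rewrite !F_sasE, !sas_top in H. exact H. Qed.
Lemma single_inj e e' : single e = single e' -> e = e'.
Proof. intro H. apply (f_equal (fun A => A e)) in H. unfold single in H. rewrite <- H. reflexivity. Qed.

Lemma pmul_iff (A B : E -> Prop) c : @qmul P A B c <-> exists a b, A a /\ B b /\ c = mulE a b.
Proof. simpl. split.
 - intros [a [b [Ha [Hb H]]]]. exists a, b. repeat split; auto. apply E_eq. rewrite F_mulE. exact H.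
 - intros [a [b [Ha [Hb ->]]]]. exists a, b. repeat split; auto. apply F_mulE. Qed.
Lemma pone_iff c : @qone P c <-> c = idE.
Proof. simpl. split. intro H; apply E_eq; exact H. intros ->; reflexivity. Qed.
Lemma pinv_iff (A : E -> Prop) c : @qinv P A c <-> exists a, A a /\ c = invE a.
Proof. simpl. split.
 - intros [a [Ha H]]. exists a; split; auto. apply E_eq. rewrite F_invE. exact H.
 - intros [a [Ha ->]]. exists a; split; auto. apply F_invE. Qed.
Lemma pneg_eq (A : E -> Prop) : @qneg P A = single (sasE (pp (sA A))).
Proof. apply set_ext; intro c. simpl. unfold single. split.
 - intro H. apply E_eq. rewrite F_sasE. exact H.
 - intros ->. apply F_sasE. Qed.
Lemma pqle_iff (A B : E -> Prop) : @qle P A B <-> forall c, A c -> B c.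
Proof. unfold qle. simpl. split.
 - intros H c Hc. rewrite <- H. exists A; split; auto. left; auto.
 - intro H. apply set_ext; intro c. split.
   + intros [X [[-> | ->] HX]]; auto.
   + intro Hc. exists B; split; auto. right; auto. Qed.

Lemma sA_le A u : le (sA A) u <-> forall a, A a -> le (FE a top) u.
Proof. unfold sA. apply msup_img_le. Qed.
Lemma sA_single e : sA (single e) = FE e top.
Proof. apply eq_ge; intro u. rewrite sA_le. unfold single. split. intro H; apply H; auto. intros H a ->; auto. Qed.
Lemma sA_neg A : sA (@qneg P A) = pp (sA A).
Proof. rewrite pneg_eq, sA_single, F_sasE. apply sas_top. Qed.
Lemma pnn_eq A : @qneg P (@qneg P A) = single (sasE (sA A)).
Proof. rewrite (pneg_eq (qneg A)), sA_neg, pp_invol. reflexivity. Qed.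
Lemma sA_nn A : sA (@qneg P (@qneg P A)) = sA A.
Proof. rewrite !sA_neg, pp_invol. reflexivity. Qed.
Lemma pneg_congr A B : sA A = sA B -> @qneg P A = @qneg P B.
Proof. intro H. rewrite !pneg_eq, H. reflexivity. Qed.
Lemma sA_join_le S u : le (sA (@qjoin P S)) u <-> forall A, S A -> le (sA A) u.
Proof. rewrite sA_le. simpl. split.
 - intros H A HA. apply sA_le. intros a Ha. apply H. exists A; auto.
 - intros H a [A [HA Ha]]. apply (proj1 (sA_le A u) (H A HA)). exact Ha. Qed.
Lemma sA_pair A B : sA (@qjoin P (pairset A B)) = mjoin (sA A) (sA B).
Proof. apply eq_ge; intro u. rewrite sA_join_le, mjoin_le_iff. unfold pairset. split.
 - intro H; split; apply H; auto.
 - intros [H1 H2] X [-> | ->]; auto. Qed.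
Lemma sA_mul_le A B u : le (sA (@qmul P A B)) u <-> forall a b, A a -> B b -> le (FE a (FE b top)) u.
Proof. rewrite sA_le. split.
 - intros H a b Ha Hb. specialize (H (mulE a b)). rewrite F_mulE in H. apply H, pmul_iff. exists a, b; auto.
 - intros H c Hc. apply pmul_iff in Hc as [a [b [Ha [Hb ->]]]]. rewrite F_mulE. auto. Qed.
Lemma FE_sA_le (a : E) B u : le (FE a (sA B)) u <-> forall b, B b -> le (FE a (FE b top)) u.
Proof. unfold sA. rewrite (adj_sup_le _ _ _ _ (adjraw_spec (proj1_sig a))). split.
 - intros H b Hb. apply H. exists b; auto.
 - intros H y [b [Hb ->]]. auto. Qed.
Lemma sA_mul_single e B : sA (@qmul P (single e) B) = FE e (sA B).
Proof. apply eq_ge; intro u. rewrite sA_mul_le, FE_sA_le. unfold single. split.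
 - intros H b Hb. apply H; auto.
 - intros H a b -> Hb. auto. Qed.
Lemma pinv_single e : @qinv P (single e) = single (invE e).
Proof. apply set_ext; intro c. rewrite pinv_iff. unfold single. split.
 - intros [a [-> ->]]. reflexivity.
 - intros ->. exists e; auto. Qed.

Lemma P_is_IDA : is_IDA P.
Proof.
 unfold is_IDA. repeat match goal with |- _ /\ _ => split end.
 - intro x. apply pqle_iff; auto.
 - intros x y z H1 H2. rewrite pqle_iff in *. auto.
 - intros x y H1 H2. rewrite pqle_iff in *. apply set_ext; intro c; split; auto.
 - intro S. split.
   + intros A HA. apply pqle_iff. intros c Hc. exists A; auto.
   + intros U HU. apply pqle_iff. intros c [A [HA Hc]]. apply (proj1 (pqle_iff _ _) (HU A HA)); auto.
 - intros x y z. apply set_ext; intro c. rewrite !pmul_iff. split.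
   + intros [a [d [Ha [Hd ->]]]]. apply pmul_iff in Hd as [b [e [Hb [He ->]]]].
     exists (mulE a b), e. repeat split; auto. apply pmul_iff. exists a, b; auto. apply mulE_assoc.
   + intros [d [e [Hd [He ->]]]]. apply pmul_iff in Hd as [a [b [Ha [Hb ->]]]].
     exists a, (mulE b e). repeat split; auto. apply pmul_iff. exists b, e; auto. symmetry; apply mulE_assoc.
 - intro x. apply set_ext; intro c. rewrite pmul_iff. split.
   + intros [a [b [Ha [Hb ->]]]]. apply pone_iff in Ha. subst a. rewrite mulE_id_l. exact Hb.
   + intro Hc. exists idE, c. split; [apply pone_iff; reflexivity| split; [exact Hc| symmetry; apply mulE_id_l]].
 - intro x. apply set_ext; intro c. rewrite pmul_iff. split.
   + intros [a [b [Ha [Hb ->]]]]. apply pone_iff in Hb. subst b. rewrite mulE_id_r. exact Ha.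
   + intro Hc. exists c, idE. split; [exact Hc| split; [apply pone_iff; reflexivity| symmetry; apply mulE_id_r]].
 - intros x S. apply set_ext; intro c. rewrite pmul_iff. simpl. split.
   + intros [a [d [Ha [[A [HA Hd]] ->]]]]. exists (@qmul P x A). split. exists A; auto.
     apply pmul_iff. exists a, d; auto.
   + intros [X [[A [HA ->]] Hc]]. apply pmul_iff in Hc as [a [d [Ha [Hd ->]]]].
     exists a, d. repeat split; auto. exists A; auto.
 - intros x S. apply set_ext; intro c. rewrite pmul_iff. simpl. split.
   + intros [d [a [[A [HA Hd]] [Ha ->]]]]. exists (@qmul P A x). split. exists A; auto.
     apply pmul_iff. exists d, a; auto.
   + intros [X [[A [HA ->]] Hc]]. apply pmul_iff in Hc as [d [a [Hd [Ha ->]]]].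
     exists d, a. repeat split; auto. exists A; auto.
 - intro x. apply set_ext; intro c. rewrite pinv_iff. split.
   + intros [d [Hd ->]]. apply pinv_iff in Hd as [a [Ha ->]]. rewrite invE_invol; auto.
   + intro Hc. exists (invE c). split. apply pinv_iff. exists c; auto. symmetry; apply invE_invol.
 - intros x y. apply set_ext; intro c. rewrite pinv_iff, pmul_iff. split.
   + intros [d [Hd ->]]. apply pmul_iff in Hd as [a [b [Ha [Hb ->]]]].
     exists (invE b), (invE a). repeat split. apply pinv_iff; eauto. apply pinv_iff; eauto. apply invE_mul.
   + intros [d [e [Hd [He ->]]]]. apply pinv_iff in Hd as [b [Hb ->]]. apply pinv_iff in He as [a [Ha ->]].
     exists (mulE a b). split. apply pmul_iff; eauto 6. symmetry; apply invE_mul.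
 - intro S. apply set_ext; intro c. rewrite pinv_iff. simpl. split.
   + intros [a [[A [HA Ha]] ->]]. exists (@qinv P A). split. exists A; auto. apply pinv_iff; eauto.
   + intros [X [[A [HA ->]] Hc]]. apply pinv_iff in Hc as [a [Ha ->]]. exists a. split; auto. exists A; auto.
 - intros x y. apply pneg_congr. rewrite pnn_eq. apply eq_ge; intro u. rewrite !sA_mul_le. split.
   + intros H a b Ha Hb. specialize (H a (sasE (sA y)) Ha eq_refl). rewrite F_sasE, sas_top in H.
     apply FE_sA_le with (B := y); auto.
   + intros H a b Ha Hb. unfold single in Hb. subst b. rewrite F_sasE, sas_top. apply FE_sA_le. intros b Hb; auto.
 - intros S. apply pneg_congr. apply eq_ge; intro u. rewrite !sA_join_le. split.
   + intros H A HA. rewrite <- sA_nn. apply H. exists A; auto.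
   + intros H X [A [HA ->]]. rewrite sA_nn. auto.
 - intro x. rewrite pneg_eq, pinv_single, invE_sas. reflexivity.
 - intros x y. apply pneg_congr. rewrite sA_neg, pnn_eq, sA_mul_single, F_sasE.
   rewrite !sA_pair, !sA_neg, sA_pair, sA_neg. unfold sas, sasaki. rewrite pp_mmeet. reflexivity.
Qed.

Lemma E_eq2 (c d : E) : proj1_sig c = proj1_sig d -> c = d.
Proof. intro H. apply E_eq. rewrite H. reflexivity. Qed.

Lemma test_iff (k : P) : test k <-> exists m, k = single (sasE m).
Proof. split.
 - intros [l ->]. exists (pp (sA l)). apply pneg_eq.
 - intros [m ->]. exists (single (sasE (pp m))). rewrite pneg_eq, sA_single, F_sasE, sas_top, pp_invol. reflexivity. Qed.

Definition phiT (m : M) : Tst P := exist _ (single (sasE m)) (proj2 (test_iff _) (ex_intro _ m eq_refl)).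
Definition psiT (t : Tst P) : M := sA (proj1_sig t).

Lemma psi_phi m : psiT (phiT m) = m.
Proof. unfold psiT, phiT; simpl. rewrite sA_single, F_sasE. apply sas_top. Qed.
Lemma phi_psi t : phiT (psiT t) = t.
Proof. destruct t as [k Hk]. pose proof Hk as Hk'. apply test_iff in Hk' as [m ->].
 unfold phiT, psiT; simpl. rewrite sA_single, F_sasE, sas_top. f_equal. apply proof_irrelevance. Qed.
Lemma tst_eq (t : Tst P) : proj1_sig t = single (sasE (psiT t)).
Proof. rewrite <- (phi_psi t) at 1. reflexivity. Qed.

Lemma tle_iff (a b : Tst P) : tle a b <-> le (psiT a) (psiT b).
Proof. unfold tle, tvee. rewrite pnn_eq, sA_pair. rewrite (tst_eq b). rewrite sA_single, F_sasE, sas_top. fold (psiT a). split.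
 - intro H. apply single_inj, sasE_inj in H. rewrite <- H. apply le_mjoin_l.
 - intro H. f_equal. f_equal. apply le_anti. apply mjoin_le_iff; split; [exact H| apply le_refl]. apply le_mjoin_r. Qed.
Lemma psi_perp (a : Tst P) : psiT (tperp a) = pp (psiT a).
Proof. unfold psiT, tperp; simpl. apply sA_neg. Qed.

Lemma P_semiFoulis : semiFoulis P.
Proof. unfold semiFoulis. eapply coml_transfer with (psi := psiT) (phi := phiT).
 apply (cm_ax M). apply psi_phi. apply phi_psi. apply tle_iff. apply psi_perp. Qed.

Context (HT3 : T3 T).

Lemma T3in x : L x -> T P (fun c : E => proj1_sig c = x).
Proof. apply (proj1 (HT3 M)). Qed.
Lemma T3surj z : T P z -> exists x, L x /\ (fun c : E => proj1_sig c = x) = z.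
Proof. apply (proj1 (proj2 (proj2 (HT3 M)))). Qed.
Lemma T3single z : T P z -> exists e : E, z = single e.
Proof. intro H. destruct (T3surj z H) as [x [Hx <-]]. exists (exist _ x Hx).
 apply set_ext; intro c. unfold single. split. intro H1. apply E_eq2. exact H1. intros ->. reflexivity. Qed.

Lemma P_TODA2 : forall A : P -> Prop,
     (forall k, T P k -> A k) ->
     (forall x y, A x -> A y -> A (qmul x y)) ->
     (forall x, A x -> A (qinv x)) ->
     (forall S, (forall x, S x -> A x) -> A (qjoin S)) ->
     forall k, A k.
Proof. intros A H1 _ _ H4 k.
 set (S := fun X : P => exists c : E, k c /\ X = (fun c' : E => proj1_sig c' = proj1_sig c)).
 assert (Ek : @qjoin P S = k).
 { apply set_ext; intro c'. simpl. split.
   - intros [X [[c [Hc ->]] Hc']]. apply E_eq2 in Hc'. subst; auto.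
   - intro Hc. exists (fun c'' : E => proj1_sig c'' = proj1_sig c'). split; auto. exists c'; auto. }
 rewrite <- Ek. apply H4. intros X [c [Hc ->]]. apply H1, T3in, (proj2_sig c). Qed.

Lemma TODA3_aux (S S' : P -> Prop) : (forall x, S x -> T P x) -> (forall x, S' x -> T P x) ->
  @qjoin P S = @qjoin P S' -> forall X, S X -> S' X.
Proof. intros HS HS' H X HX. destruct (T3single X (HS X HX)) as [e ->].
 assert (Hj : @qjoin P S e) by (exists (single e); split; auto; reflexivity).
 rewrite H in Hj. destruct Hj as [Y [HY He]]. destruct (T3single Y (HS' Y HY)) as [e' ->].
 unfold single in He. subst e'. exact HY. Qed.

Lemma P_TODA3 : forall S S' : P -> Prop, (forall x, S x -> T P x) -> (forall x, S' x -> T P x) ->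
     (qjoin S = qjoin S' <-> (forall x, S x <-> S' x)).
Proof. intros S S' HS HS'. split.
 - intros H x. split; apply TODA3_aux; auto.
 - intro H. apply set_ext in H. rewrite H. reflexivity. Qed.

Lemma P_TODA4 : forall s t, T P s -> T P t -> (s = t <-> tequiv s t).
Proof. intros s t Hs Ht. split.
 - intros -> w _. reflexivity.
 - intro H. destruct (T3single s Hs) as [e ->]. destruct (T3single t Ht) as [e' ->].
   f_equal. apply E_eq. apply functional_extensionality; intro m.
   assert (Hw : @test P (single (sasE m))) by (apply test_iff; eauto).
   specialize (H _ Hw). unfold bullet in H. rewrite !pnn_eq, !sA_mul_single, !sA_single, !F_sasE, !sas_top in H.
   apply single_inj, sasE_inj in H. exact H. Qed.

Lemma P_TODA : TODA T P.
Proof. unfold TODA. split; [apply P_is_IDA|]. split; [apply P_semiFoulis|]. split; [apply P_TODA2|].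
 split; [apply P_TODA3| apply P_TODA4]. Qed.

End PS.

Theorem lemma5p1 (T : Tfun) (HT : Tfunctor T) (M : COML) :
  TODA T (PIDA (T (LinIDA M))).
Proof.
  destruct HT as [H1 [H2 [H3 H4]]]. apply (@P_TODA M T H1 H3).
Qed.
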